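(* If a completely simple semigroup $S=(G,P,\Lambda,I)$ is an equational domain in the language $\mathcal{L}_S$, then its structural group $G$ is an equational domain in the group language $\mathcal{L}_G$.
   Context: Rees representation: a completely simple semigroup $S=(G,P,\Lambda,I)$ is given by a group $G$ (the structural group), index sets $\Lambda,I$ (each containing an element $1$), and a matrix $P=(p_{i\lambda})_{i\in I,\lambda\in\Lambda}$ over $G$ normalised so that $p_{1\lambda}=p_{i1}=1_G$; elements are triples $(\lambda,g,i)$ with product $(\lambda,g,i)(\mu,h,j)=(\lambda,gp_{i\mu}h,j)$ and inversion $(\lambda,g,i)^{-1}=(\lambda,p_{i\lambda}^{-1}g^{-1}p_{i\lambda}^{-1},i)$. The language $\mathcal{L}_S$ is $\{\cdot,{}^{-1}\}$ plus a constant for each element of $S$; the group language $\mathcal{L}_G$ is $\{\cdot,{}^{-1},1\}$ plus a constant for each element of $G$ (so equations over $G$ are equalities $w(X)=1$ with $w\in F(X)*G$). For either structure: an equation is an equality of two terms, a system is a set of equations, an algebraic set is the solution set of a system, and the structure is an equational domain (e.d.) if every finite union of algebraic sets is algebraic. *)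

(* Defs.v *)
From mathcomp Require Import all_boot.
Set Implicit Arguments. Unset Strict Implicit. Unset Printing Implicit Defensive.

Record Group := {
  gcar :> Type;
  gmul : gcar -> gcar -> gcar;
  ginv : gcar -> gcar;
  gone : gcar;
  gmulA : forall x y z, gmul x (gmul y z) = gmul (gmul x y) z;
  gmul1g : forall x, gmul gone x = x;
  gmulVg : forall x, gmul (ginv x) x = gone
}.

(** Rees data (G, P, Lambda, I) with distinguished indices 1 in Lambda and I
    and a normalised sandwich matrix P = (p_{i lambda}). *)
Record ReesData := {
  rG : Group;
  rLam : Type;
  rI : Type;
  rLam1 : rLam;
  rI1 : rI;
  rP : rI -> rLam -> rG;
  rP1l : forall l, rP rI1 l = gone rG;
  rPi1 : forall i, rP i rLam1 = gone rG
}.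

Definition rees_car (R : ReesData) : Type := (rLam R * rG R * rI R)%type.

Definition rees_mul (R : ReesData) (a b : rees_car R) : rees_car R :=
  let: (l, g, i) := a in let: (m, h, j) := b in
  (l, gmul g (gmul (rP i m) h), j).

Definition rees_inv (R : ReesData) (a : rees_car R) : rees_car R :=
  let: (l, g, i) := a in
  (l, gmul (ginv (rP i l)) (gmul (ginv g) (ginv (rP i l))), i).

Inductive sterm (A : Type) (n : nat) : Type :=
| SVar of 'I_n
| SConst of A
| SMul of sterm A n & sterm A n
| SInv of sterm A n.

Fixpoint seval (A : Type) (mul : A -> A -> A) (inv : A -> A) (n : nat)
  (x : 'I_n -> A) (t : sterm A n) : A :=
  match t with
  | SVar i => x i
  | SConst a => a
  | SMul s u => mul (seval mul inv x s) (seval mul inv x u)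
  | SInv s => inv (seval mul inv x s)
  end.

Inductive gterm (A : Type) (n : nat) : Type :=
| GVar of 'I_n
| GConst of A
| GOne
| GMul of gterm A n & gterm A n
| GInv of gterm A n.

Fixpoint geval (G : Group) (n : nat) (x : 'I_n -> G) (t : gterm G n) : G :=
  match t with
  | GVar i => x i
  | GConst a => a
  | GOne => gone G
  | GMul s u => gmul (geval x s) (geval x u)
  | GInv s => ginv (geval x s)
  end.

(** Generic algebraic geometry: an equation is a pair of terms (t1 = t2);
    a system is an arbitrary set of equations; an algebraic set (in A^n) is the
    solution set of a system; A is an equational domain if the union of two
    algebraic sets (hence every finite nonempty union) is algebraic. *)
Definition algebraic (A : Type) (term : nat -> Type)
  (eval : forall n, ('I_n -> A) -> term n -> A) (n : nat)
  (Y : ('I_n -> A) -> Prop) : Prop :=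
  exists Sys : (term n * term n)%type -> Prop,
    forall x, Y x <-> (forall e, Sys e -> eval n x e.1 = eval n x e.2).

Definition equational_domain (A : Type) (term : nat -> Type)
  (eval : forall n, ('I_n -> A) -> term n -> A) : Prop :=
  forall (n : nat) (Y1 Y2 : ('I_n -> A) -> Prop),
    algebraic eval Y1 -> algebraic eval Y2 ->
    algebraic eval (fun x => Y1 x \/ Y2 x).

Definition rees_ed (R : ReesData) : Prop :=
  @equational_domain (rees_car R) (sterm (rees_car R))
    (fun n x t => seval (@rees_mul R) (@rees_inv R) x t).

Definition group_ed (G : Group) : Prop :=
  @equational_domain G (gterm G) (fun n x t => geval x t).

(* Main.v *)
Require Import Defs.
From mathcomp Require Import all_boot.
From Stdlib Require Import Classical.
Set Implicit Arguments. Unset Strict Implicit.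

Section Gr.
Variable GG : Defs.Group.
Lemma mulgV (x : GG) : gmul x (ginv x) = gone GG.
Proof.
rewrite -[gmul x (ginv x)]gmul1g -{1}(gmulVg (ginv x)) -gmulA (gmulA (ginv x)).
by rewrite gmulVg gmul1g gmulVg.
Qed.
Lemma mulg1 (x : GG) : gmul x (gone GG) = x.
Proof. by rewrite -(gmulVg x) gmulA mulgV gmul1g. Qed.
Lemma inv1 : ginv (gone GG) = gone GG.
Proof. by rewrite -[ginv _]mulg1 gmulVg. Qed.
End Gr.

Section Main.
Variable R : ReesData.
Notation S := (rees_car R).
Notation G := (rG R).
Definition emb (g : G) : S := (rLam1 R, g, rI1 R).
Definition eS : S := emb (gone G).

Fixpoint tr n (t : gterm G n) : sterm S n :=
  match t with
  | GVar i => SVar S i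
  | GConst a => SConst n (emb a)
  | GOne => SConst n eS
  | GMul s u => SMul (tr s) (tr u)
  | GInv s => SInv (tr s)
  end.

Lemma tr_eval n (x : 'I_n -> S) (t : gterm G n) :
  (forall i, x i = emb (x i).1.2) ->
  seval (@rees_mul R) (@rees_inv R) x (tr t) = emb (geval (fun i => (x i).1.2) t).
Proof.
move=> Hx; elim: t => [i|a||s IHs u IHu|s IHs] //=.
- by rewrite IHs IHu /= rP1l gmul1g.
- by rewrite IHs /= rP1l inv1 mulg1 gmul1g.
Qed.

Fixpoint back n (t : sterm S n) : (rLam R * gterm G n * rI R) :=
  match t with
  | SVar i => (rLam1 R, GVar G i, rI1 R)
  | SConst a => (a.1.1, GConst n a.1.2, a.2)
  | SMul s u =>
      let: (ls, gs, is_) := back s in let: (lu, gu, iu) := back u in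
      (ls, GMul gs (GMul (GConst n (rP is_ lu)) gu), iu)
  | SInv s =>
      let: (ls, gs, is_) := back s in
      (ls, GMul (GConst n (ginv (rP is_ ls)))
              (GMul (GInv gs) (GConst n (ginv (rP is_ ls)))), is_)
  end.

Lemma back_eval n (x : 'I_n -> G) (t : sterm S n) :
  seval (@rees_mul R) (@rees_inv R) (fun i => emb (x i)) t =
  let: (l, g, i) := back t in (l, geval x g, i).
Proof.
elim: t => [i|[[l g] i]|s IHs u IHu|s IHs] //=.
- rewrite IHs IHu; case: (back s) => [[ls gs] is_]; by case: (back u) => [[lu gu] iu].
- rewrite IHs; by case: (back s) => [[ls gs] is_].
Qed.

Lemma memS (a : S) : a = rees_mul (rees_mul eS a) eS <-> a = emb a.1.2.
Proof.
case: a => [[l g] i] /=; rewrite rP1l rPi1 gmul1g mulg1 gmul1g /emb.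
by rewrite mulg1.
Qed.

Lemma lift n (Y : ('I_n -> G) -> Prop) :
  algebraic (fun n x t => geval x t) Y ->
  algebraic (fun n x t => seval (@rees_mul R) (@rees_inv R) x t)
    (fun x : 'I_n -> S => (forall i, x i = emb (x i).1.2) /\ Y (fun i => (x i).1.2)).
Proof.
case=> Sys HS.
exists (fun e => (exists i, e = (SVar S i, SMul (SMul (SConst n eS) (SVar S i)) (SConst n eS)))
  \/ exists ge, Sys ge /\ e = (tr ge.1, tr ge.2)) => x; split.
- case=> Hx HY e [[i ->]|[ge [Hge ->]]] /=.
  + by apply/memS; rewrite -Hx.
  + rewrite !tr_eval //; congr emb; exact: (proj1 (HS _) HY ge Hge).
- move=> H.
  have Hx : forall i, x i = emb (x i).1.2.
    move=> i; apply/memS; exact: (H _ (or_introl (ex_intro _ i erefl))).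
  split=> //; apply/HS => ge Hge.
  have := H _ (or_intror (ex_intro _ ge (conj Hge erefl))).
  by rewrite /= !tr_eval // => -[].
Qed.

End Main.

Theorem mainTheorem3 (R : ReesData) : rees_ed R -> group_ed (rG R).
Proof.
move=> Hed n Y1 Y2 H1 H2.
have [T HT] := Hed n _ _ (lift H1) (lift H2).
have HY : forall x, Y1 x \/ Y2 x <->
   (forall e, T e -> seval (@rees_mul R) (@rees_inv R) (fun i => @emb R (x i)) e.1 =
                     seval (@rees_mul R) (@rees_inv R) (fun i => @emb R (x i)) e.2).
  move=> x; rewrite -HT /=; split.
  - by case=> H; [left|right]; split.
  - by case=> -[_ H]; [left|right].
case: (H1) => Sys1 HS1.
exists (fun ge => (exists e, T e /\ (back e.1).1.1 = (back e.2).1.1 /\ (back e.1).2 = (back e.2).2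
           /\ ge = ((back e.1).1.2, (back e.2).1.2))
  \/ ((exists e, T e /\ ~ ((back e.1).1.1 = (back e.2).1.1 /\ (back e.1).2 = (back e.2).2))
      /\ Sys1 ge)) => x; split.
- move=> Hu ge [[e [Te [El [Ei ->]]]]|[[e [Te Hne]] _]].
  + have := proj1 (HY x) Hu e Te; rewrite !back_eval /=.
    case: (back e.1) El Ei => [[l1 g1] i1]; case: (back e.2) => [[l2 g2] i2] /=.
    by move=> _ _ [].
  + exfalso; apply: Hne.
    have := proj1 (HY x) Hu e Te; rewrite !back_eval /=.
    case: (back e.1) => [[l1 g1] i1]; case: (back e.2) => [[l2 g2] i2] /=.
    by case=> -> _ ->.
- move=> Hs.
  case: (classic (exists e, T e /\ ~ ((back e.1).1.1 = (back e.2).1.1 /\ (back e.1).2 = (back e.2).2)))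
    => [Hm|Hnm].
  + left; apply/HS1 => ge Hge; exact: Hs _ (or_intror (conj Hm Hge)).
  + apply/HY => e Te; rewrite !back_eval.
    have [El Ei] : (back e.1).1.1 = (back e.2).1.1 /\ (back e.1).2 = (back e.2).2.
      apply: Classical_Prop.NNPP => Hn; apply: Hnm; by exists e.
    have := Hs _ (or_introl (ex_intro _ e (conj Te (conj El (conj Ei erefl))))).
    move: El Ei; case: (back e.1) => [[l1 g1] i1]; case: (back e.2) => [[l2 g2] i2] /=.
    by move=> -> -> ->.
Qed.
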